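(* Let $G$ be a group with finite generating set $S$ and let $\Gamma$ be a tileset graph for $(G,S)$. The following are equivalent: (1) $\Gamma$ admits a bi-infinite snake; (2) $\Gamma$ admits a one-way infinite snake; (3) $\Gamma$ admits a snake of every length.
   Context: A tileset graph for $(G,S)$ is a finite multigraph $\Gamma=(A,B)$ whose edges are triples $(a,a',s)$ with $a,a'\in A$, $s\in S\cup S^{-1}$, such that $(a,a',s)\in B$ implies $(a',a,s^{-1})\in B$. For $I$ equal to $\mathbb{Z}$, $\mathbb{N}$ or a finite integer interval $\{n,\dots,m\}$, a $\Gamma$-snake on $I$ is a pair $(\omega,\zeta)$ with $\omega:I\to G$ injective and $\zeta:I\to A$ such that whenever $i,i+1\in I$: $d\omega_i:=\omega(i)^{-1}\omega(i+1)\in S\cup S^{-1}$ and $(\zeta(i),\zeta(i+1),d\omega_i)\in B$. It is bi-infinite if $I=\mathbb{Z}$, one-way infinite if $I=\mathbb{N}$; ''a snake of every length'' means that for every $n$ there is a $\Gamma$-snake on a finite interval with at least $n$ elements. *)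

(* Defs.v *)
From HB Require Import structures.
From mathcomp Require Import all_boot monoid.
From Stdlib Require Import ZArith.
Set Implicit Arguments. Unset Strict Implicit. Unset Printing Implicit Defensive.
Local Open Scope group_scope.

Definition symgen (G : groupType) (S : seq G) (s : G) : Prop :=
  s \in S \/ s^-1 \in S.

Definition generates (G : groupType) (S : seq G) : Prop :=
  forall g : G, exists w : seq G,
    (forall s, s \in w -> symgen S s) /\ g = foldr (fun x y => x * y) 1 w.

Definition tileset_graph (G : groupType) (S : seq G) (A : finType)
    (B : A -> A -> G -> Prop) : Prop :=
  (forall a a' s, B a a' s -> symgen S s) /\
  (forall a a' s, B a a' s -> B a' a s^-1).

Definition snake_on (G : groupType) (S : seq G) (A : finType)
    (B : A -> A -> G -> Prop) (I : Z -> Prop) (omega : Z -> G) (zeta : Z -> A) : Prop :=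
  (forall i j, I i -> I j -> omega i = omega j -> i = j) /\
  (forall i, I i -> I (i + 1)%Z ->
     symgen S ((omega i)^-1 * omega (i + 1)%Z) /\
     B (zeta i) (zeta (i + 1)%Z) ((omega i)^-1 * omega (i + 1)%Z)).

Definition biinfinite_snake G S A B : Prop :=
  exists omega zeta, @snake_on G S A B (fun _ => True) omega zeta.

Definition oneway_snake G S A B : Prop :=
  exists omega zeta, @snake_on G S A B (fun i => (0 <= i)%Z) omega zeta.

Definition snakes_every_length G S A B : Prop :=
  forall k : nat, exists (n m : Z) omega zeta,
    (Z.of_nat k <= m - n + 1)%Z /\
    @snake_on G S A B (fun i => (n <= i <= m)%Z) omega zeta.

(* Main.v *)
Require Import Defs.
From mathcomp Require Import all_boot monoid.
From Stdlib Require Import ZArith Lia Classical ClassicalEpsilon.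
Set Implicit Arguments. Unset Strict Implicit. Unset Printing Implicit Defensive.
Local Open Scope group_scope.

Section X.
Variables (G : groupType) (S : seq G) (A : finType) (B : A -> A -> G -> Prop).

Lemma snake_mono (I J : Z -> Prop) w z :
  (forall i, I i -> J i) -> snake_on S B J w z -> snake_on S B I w z.
Proof. move=> IJ [Hi He]; split; [move=> i j ? ?; apply: Hi; auto | move=> i ? ?; apply: He; auto]. Qed.

Lemma snake_agree (I : Z -> Prop) w z w' z' :
  (forall i, I i -> w i = w' i /\ z i = z' i) -> snake_on S B I w z -> snake_on S B I w' z'.
Proof.
move=> Hag [Hi He]; split.
  move=> i j Ii Ij; rewrite -(proj1 (Hag _ Ii)) -(proj1 (Hag _ Ij)); exact: Hi.
move=> i Ii Ii1; rewrite -(proj1 (Hag _ Ii)) -(proj1 (Hag _ Ii1)) -(proj2 (Hag _ Ii)) -(proj2 (Hag _ Ii1)).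
exact: He.
Qed.

Lemma pigeon (T : eqType) (l : seq T) (Q : T -> nat -> Prop) :
  (forall c M N, le M N -> Q c N -> Q c M) ->
  (forall N, exists c, c \in l /\ Q c N) -> exists c, c \in l /\ forall N, Q c N.
Proof.
move=> Hm; elim: l => [|x l IH] H.
  by case: (H 0%N) => c [].
case: (classic (forall N, Q x N)) => [Hx|Hx].
  by exists x; rewrite in_cons eqxx.
case: (not_all_ex_not _ _ Hx) => N0 HN0.
case: IH => [N|c [cl Hc]]; last by exists c; rewrite in_cons cl orbT.
case: (H (Nat.max N N0)) => c []; rewrite in_cons => /orP [/eqP->|cl] Hc.
  by case: HN0; apply: (Hm _ _ _ _ Hc); lia.
exists c; split => //; apply: (Hm _ _ _ _ Hc); lia.
Qed.

Definition L := S ++ map (fun s => s^-1) S.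

Lemma symgen_L x : symgen S x -> x \in L.
Proof.
case=> h; rewrite mem_cat ?h //.
by apply/orP; right; apply/mapP; exists x^-1 => //; rewrite invgK.
Qed.

Lemma symgenV x : symgen S x -> symgen S x^-1.
Proof. by case=> h; [right; rewrite invgK | left]. Qed.


Definition C (r : Z) : Z -> Prop := fun i => (- r <= i <= r)%Z.
Definition agree (k : nat) (p q : (Z -> G) * (Z -> A)) :=
  forall i, C (Z.of_nat k) i -> p.1 i = q.1 i /\ p.2 i = q.2 i.
Definition ext (k : nat) (p : (Z -> G) * (Z -> A)) :=
  forall N : nat, exists w z, snake_on S B (C (Z.of_nat k + Z.of_nat N)) w z /\ agree k p (w, z).

Definition extend (k : nat) (p : (Z -> G) * (Z -> A)) (c : (A * A) * (G * G)) :
  (Z -> G) * (Z -> A) :=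
  let K := Z.of_nat k in
  (fun i => if (i =? K + 1)%Z then p.1 K * c.2.2
            else if (i =? - K - 1)%Z then p.1 (- K)%Z * c.2.1 else p.1 i,
   fun i => if (i =? K + 1)%Z then c.1.2
            else if (i =? - K - 1)%Z then c.1.1 else p.2 i).

Lemma step k p : ext k p -> exists c, ext k.+1 (extend k p c).
Proof.
move=> Hp.
pose cands := [seq (x, y) | x <- [seq (a, b) | a <- enum A, b <- enum A],
                            y <- [seq (s, t) | s <- L, t <- L]].
pose Q := fun c N => exists w z, snake_on S B (C (Z.of_nat k.+1 + Z.of_nat N)) w z /\
                                 agree k.+1 (extend k p c) (w, z).
have [c [_ Hc]] : exists c, c \in cands /\ forall N, Q c N.
  apply: pigeon.
    move=> c M N MN [w [z [Hs Ha]]]; exists w, z; split => //.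
    apply: snake_mono Hs; rewrite /C => i; lia.
  move=> N; case: (Hp N.+1) => w [z [Hs Ha]].
  have HK : forall i, C (Z.of_nat k) i -> C (Z.of_nat k + Z.of_nat N.+1) i.
    by rewrite /C => i; lia.
  set K := Z.of_nat k.
  exists ((z (- K - 1)%Z, z (K + 1)%Z), ((w (- K)%Z)^-1 * w (- K - 1)%Z, (w K)^-1 * w (K + 1)%Z)).
  split.
    apply: allpairs_f; apply: allpairs_f; rewrite ?mem_enum //; apply: symgen_L.
    - have := proj1 (proj2 Hs (- K - 1)%Z ltac:(rewrite /C /K; lia) ltac:(rewrite /C /K; lia)).
      by replace (- K - 1 + 1)%Z with (- K)%Z by lia; move/symgenV; rewrite invgM invgK.
    - exact: (proj1 (proj2 Hs K ltac:(rewrite /C /K; lia) ltac:(rewrite /C /K; lia))).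
  exists w, z; split.
    apply: snake_mono Hs; rewrite /C /K => i; lia.
  move=> i Ci /=; rewrite -/K.
  case: (Z.eqb_spec i (K + 1)) => [->|h1].
    by rewrite (proj1 (Ha K ltac:(rewrite /C /K; lia))) /= mulgA mulgV mul1g.
  case: (Z.eqb_spec i (- K - 1)) => [->|h2].
    by rewrite (proj1 (Ha (- K)%Z ltac:(rewrite /C /K; lia))) /= mulgA mulgV mul1g.
  apply: Ha; move: Ci; rewrite /C /K; lia.
by exists c.
Qed.


Lemma centered : snakes_every_length S B -> forall N : nat,
  exists w z, snake_on S B (C (Z.of_nat N)) w z /\ w 0%Z = 1.
Proof.
move=> H N; case: (H (2 * N + 1)%coq_nat) => n [m [w [z [Hl [Hi He]]]]].
set M := Z.of_nat N.
rewrite Nat2Z.inj_add Nat2Z.inj_mul in Hl.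
exists (fun i => (w (n + M)%Z)^-1 * w (i + n + M)%Z), (fun i => z (i + n + M)%Z).
split; last by rewrite Z.add_0_l mulVg.
split.
  move=> i j Ci Cj /mulgI /Hi; rewrite /C /M in Ci Cj *.
  move=> h; have h1 : (n <= i + n + Z.of_nat N <= m)%Z by clear -Ci Hl; lia.
  have h2 : (n <= j + n + Z.of_nat N <= m)%Z by clear -Cj Hl; lia.
  have := h h1 h2; lia.
move=> i Ci Ci1; rewrite /C /M in Ci Ci1.
have := He (i + n + M)%Z ltac:(rewrite /M; lia) ltac:(rewrite /M; lia).
replace (i + 1 + n + M)%Z with (i + n + M + 1)%Z by lia.
by rewrite invgM invgK !mulgA mulgK.
Qed.

Lemma every_bi : snakes_every_length S B -> biinfinite_snake S B.
Proof.
move=> H.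
have [a [_ Ha]] : exists a, a \in enum A /\ forall N : nat,
    exists w z, snake_on S B (C (Z.of_nat N)) w z /\ w 0%Z = 1 /\ z 0%Z = a.
  apply: pigeon.
    move=> c M N MN [w [z [Hs Hw]]]; exists w, z; split => //.
    apply: snake_mono Hs; rewrite /C => i; lia.
  move=> N; case: (centered H N) => w [z [Hs Hw]].
  by exists (z 0%Z); rewrite mem_enum; split => //; exists w, z.
pose p0 : (Z -> G) * (Z -> A) := (fun _ => 1, fun _ => a).
have E0 : ext 0 p0.
  move=> N; case: (Ha N) => w [z [Hs [Hw Hz]]]; exists w, z; split => //.
  move=> i; rewrite /C /= => Ci; have -> : i = 0%Z by lia.
  by rewrite Hw Hz.
have Hst : forall k p, exists p', ext k p -> ext k.+1 p' /\ agree k p p'.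
  move=> k p; case: (classic (ext k p)) => [h|h]; last by exists p.
  case: (step h) => c hc; exists (extend k p c) => _; split => //.
  move=> i; rewrite /C /= => Ci.
  case: (Z.eqb_spec i (Z.of_nat k + 1)) => [h1|h1]; first lia.
  by case: (Z.eqb_spec i (- Z.of_nat k - 1)) => [h2|h2]; first lia.
pose stp := fun k p => proj1_sig (constructive_indefinite_description _ (Hst k p)).
have Hstp : forall k p, ext k p -> ext k.+1 (stp k p) /\ agree k p (stp k p).
  by move=> k p; rewrite /stp; case: constructive_indefinite_description.
pose fix ps n := match n with 0 => p0 | n'.+1 => stp n' (ps n') end.
have Eps : forall n, ext n (ps n).
  by elim=> [|n IH] //=; apply: (proj1 (Hstp _ _ IH)).
have Aps : forall n d, agree n (ps n) (ps (n + d)%coq_nat).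
  move=> n d; elim: d => [|d IH].
    by rewrite Nat.add_0_r => i.
  rewrite Nat.add_succ_r /= => i Ci.
  case: (IH i Ci) => -> ->; apply: (proj2 (Hstp _ _ (Eps _))).
  move: Ci; rewrite /C; lia.
have Aps' : forall n m i, le n m -> C (Z.of_nat n) i -> (ps n).1 i = (ps m).1 i /\ (ps n).2 i = (ps m).2 i.
  move=> n m i nm Ci; have -> : m = Nat.add n (Nat.sub m n) by lia.
  exact: Aps.
have Sps : forall n, snake_on S B (C (Z.of_nat n)) (ps n).1 (ps n).2.
  move=> n; case: (Eps n 0%N) => w [z [Hs Hag]].
  apply: (snake_agree (w := w) (z := z)); last first.
    by apply: snake_mono Hs; rewrite /C => i; lia.
  by move=> i Ci; case: (Hag i Ci) => -> ->.
pose idx := fun i : Z => Z.to_nat (Z.abs i).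
have Cidx : forall i, C (Z.of_nat (idx i)) i by move=> i; rewrite /C /idx; lia.
exists (fun i => (ps (idx i)).1 i), (fun i => (ps (idx i)).2 i); split.
  move=> i j _ _.
  have [h1 h2] := Aps' (idx i) (Nat.max (idx i) (idx j)) i ltac:(lia) (Cidx i).
  have [h3 h4] := Aps' (idx j) (Nat.max (idx i) (idx j)) j ltac:(lia) (Cidx j).
  rewrite h1 h3; apply: (proj1 (Sps _)); move: (Cidx i) (Cidx j); rewrite /C; lia.
move=> i _ _.
have [h1 h2] := Aps' (idx i) (Nat.max (idx i) (idx (i+1)%Z)) i ltac:(lia) (Cidx i).
have [h3 h4] := Aps' (idx (i+1)%Z) (Nat.max (idx i) (idx (i+1)%Z)) (i+1)%Z ltac:(lia) (Cidx _).
rewrite h1 h2 h3 h4; apply: (proj2 (Sps _)); move: (Cidx i) (Cidx (i+1)%Z); rewrite /C; lia.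
Qed.

End X.

Theorem proposition1 (G : groupType) (S : seq G) (A : finType)
    (B : A -> A -> G -> Prop) :
  generates S -> tileset_graph S B ->
  (biinfinite_snake S B <-> oneway_snake S B) /\
  (oneway_snake S B <-> snakes_every_length S B).
Proof.
move=> _ _.
have one_every : oneway_snake S B -> snakes_every_length S B.
  move=> [w [z Hs]] k; exists 0%Z, (Z.of_nat k), w, z; split; first lia.
  by apply: snake_mono Hs => i; lia.
have bi_one : biinfinite_snake S B -> oneway_snake S B.
  by move=> [w [z Hs]]; exists w, z; apply: snake_mono Hs.
split; split => //.
- by move=> h; apply: every_bi; apply: one_every.
- by move=> h; apply: bi_one; apply: every_bi.
Qed.
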